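(* Let $n\ge2$ and let $S_N.o$ be the Lie hypersurface of $G_2^\ast(\mathbb{R}^{n+3})$ described below, identified with the Lie group $S_N$ with the induced left-invariant metric. Equip it with the almost contact metric structure induced from the Kähler structure: $\xi=-JN$, $\eta=\langle\cdot,\xi\rangle$, $\varphi X=JX-\eta(X)N$, induced metric. Then $(S_N.o,\eta,\xi,\varphi,\langle,\rangle)$ is a contact metric manifold, i.e. $\Phi=d\eta$ where $\Phi(X,Y)=\langle X,\varphi Y\rangle$.
   Context: Identify $G_2^\ast(\mathbb{R}^{n+3})=\mathrm{SO}_0(2,n+1)/(\mathrm{SO}(2)\times\mathrm{SO}(n+1))$, with the invariant Kähler metric normalized to minimal sectional curvature $-8$, with the simply-connected Lie group $S$ whose Lie algebra $\mathfrak{s}$ has orthonormal basis $A_1,A_2,X_0,Y_1,\dots,Y_{n-1},Z_1,\dots,Z_{n-1},W_0$, nonzero brackets (with $c=2\sqrt2$) $[A_1,X_0]=cX_0$, $[A_1,Y_i]=-(c/2)Y_i$, $[A_1,Z_i]=(c/2)Z_i$, $[A_2,Y_i]=(c/2)Y_i$, $[A_2,Z_i]=(c/2)Z_i$, $[A_2,W_0]=cW_0$, $[X_0,Y_i]=cZ_i$, $[Y_i,Z_i]=cW_0$, left-invariant metric making the basis orthonormal and left-invariant complex structure $J$ with $J(A_1)=-X_0$, $J(A_2)=W_0$, $J(Y_i)=Z_i$, $J^2=-\mathrm{id}$. Let $N=\frac1{\sqrt2}(-A_1-A_2)$, $\mathfrak{s}_N=\mathfrak{s}\ominus\mathbb{R}N$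 (a subalgebra), $S_N$ the connected subgroup of $S$ with Lie algebra $\mathfrak{s}_N$, and $S_N.o$ its orbit through the identity $o$, a real hypersurface with left-invariant unit normal $N$. Here $d\eta(X,Y)=\tfrac12(X\eta(Y)-Y\eta(X)-\eta([X,Y]))$. *)

(* Defs.v *)
(* The Lie algebra s of the solvable group S (Iwasawa
   model of G_2^*(R^{n+3})) over an arbitrary real closed field R
   (the paper's case is R = the reals). *)
From HB Require Import structures.
From mathcomp Require Import all_boot all_order all_algebra.
Set Implicit Arguments. Unset Strict Implicit. Unset Printing Implicit Defensive.
Import Order.TTheory GRing.Theory Num.Theory.
Local Open Scope ring_scope.

(* Labels of the orthonormal basis A1,A2,X0,W0,Y_1..Y_m,Z_1..Z_m of s,
   with m = n-1 (indices shifted to 0..m-1). *)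
Inductive idx (m : nat) : Type :=
| iA1 | iA2 | iX0 | iW0 | iY of 'I_m | iZ of 'I_m.
Arguments iA1 {m}. Arguments iA2 {m}. Arguments iX0 {m}. Arguments iW0 {m}.

Definition basis_list (m : nat) : seq (idx m) :=
  [:: iA1; iA2; iX0; iW0] ++ map (@iY m) (enum 'I_m) ++ map (@iZ m) (enum 'I_m).

Section LieAlg.
Variables (R : rcfType) (m : nat).

Definition vec := idx m -> R.

Definition vadd (u v : vec) : vec := fun e => u e + v e.
Definition vscale (a : R) (v : vec) : vec := fun e => a * v e.

Definition bvec (e : idx m) : vec := fun f =>
  match e, f with
  | iA1, iA1 | iA2, iA2 | iX0, iX0 | iW0, iW0 => 1
  | iY i, iY j | iZ i, iZ j => if i == j then 1 else 0
  | _, _ => 0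
  end.

Definition c : R := 2 * Num.sqrt 2.

Definition br0 (e f : idx m) : vec :=
  match e, f with
  | iA1, iX0 => vscale c (bvec iX0)
  | iA1, iY i => vscale (- (c / 2)) (bvec (iY i))
  | iA1, iZ i => vscale (c / 2) (bvec (iZ i))
  | iA2, iY i => vscale (c / 2) (bvec (iY i))
  | iA2, iZ i => vscale (c / 2) (bvec (iZ i))
  | iA2, iW0 => vscale c (bvec iW0)
  | iX0, iY i => vscale c (bvec (iZ i))
  | iY i, iZ j => if i == j then vscale c (bvec iW0) else (fun _ => 0)
  | _, _ => fun _ => 0
  end.

Definition br (e f : idx m) : vec := vadd (br0 e f) (vscale (-1) (br0 f e)).

Definition bracket (u v : vec) : vec := fun g =>
  \sum_(e <- basis_list m) \sum_(f <- basis_list m) u e * v f * br e f g.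

(* Left-invariant metric: the basis is orthonormal. *)
Definition ip (u v : vec) : R := \sum_(e <- basis_list m) u e * v e.

(* Complex structure J on the basis: J A1 = -X0, J A2 = W0, J Y_i = Z_i,
   and (from J^2 = -id) J X0 = A1, J W0 = -A2, J Z_i = -Y_i. *)
Definition Jb (e : idx m) : vec :=
  match e with
  | iA1 => vscale (-1) (bvec iX0)
  | iX0 => bvec iA1
  | iA2 => bvec iW0
  | iW0 => vscale (-1) (bvec iA2)
  | iY i => bvec (iZ i)
  | iZ i => vscale (-1) (bvec (iY i))
  end.

Definition J (v : vec) : vec := fun g => \sum_(e <- basis_list m) v e * Jb e g.

Definition Nv : vec :=
  vscale (1 / Num.sqrt 2) (vadd (vscale (-1) (bvec iA1)) (vscale (-1) (bvec iA2))).

(* s_N = s minus R N (orthogonal complement of N in s). *)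
Definition in_sN (v : vec) : Prop := ip v Nv = 0.

Definition xi : vec := vscale (-1) (J Nv).
Definition eta (v : vec) : R := ip v xi.
Definition phi (v : vec) : vec := vadd (J v) (vscale (- eta v) Nv).

Definition Phi (u v : vec) : R := ip u (phi v).

(* d eta(X,Y) = 1/2 (X eta(Y) - Y eta(X) - eta([X,Y])) evaluated on
   left-invariant vector fields X, Y: eta(X), eta(Y) are then constant
   functions on S_N, so their derivatives X eta(Y), Y eta(X) vanish. *)
Definition deta (u v : vec) : R := (1 / 2) * (0 - 0 - eta (bracket u v)).

End LieAlg.

(* Main.v *)
Require Import Defs.
From HB Require Import structures.
From mathcomp Require Import all_boot all_order all_algebra.
From mathcomp Require Import ring.
Import Order.TTheory GRing.Theory Num.Theory.
Local Open Scope ring_scope.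

Lemma sum_basis (R : rcfType) m (F : idx m -> R) :
  \sum_(e <- basis_list m) F e = F iA1 + F iA2 + F iX0 + F iW0 +
   \sum_i F (iY i) + \sum_i F (iZ i).
Proof.
rewrite /basis_list big_cat /= !big_cons big_nil big_cat /= !big_map.
by rewrite -!big_enum /= addr0 !addrA.
Qed.

Section S.
Variables (R : rcfType) (m : nat).
Local Notation s := (Num.sqrt (2:R)).

Ltac simp := cbv delta [vscale vadd bvec] beta; simpl; cbv delta [vscale vadd bvec] beta; simpl;
  do 3 rewrite ?mulr0 ?mul0r ?addr0 ?add0r ?mulr1 ?mul1r ?mulrN1 ?mulN1r ?opprK ?oppr0 ?opprD ?mulrN ?mulNr.

Lemma xiE (g : idx m) : xi R g = match g with iX0 => -(1/s) | iW0 => 1/s | _ => 0 end.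
Proof.
rewrite /xi /vscale /J sum_basis /Nv /vscale /vadd /=.
rewrite !big1 => [|i _|i _]; simp; try done.
all: try case: g => [|||| j | j]; simp; try done.
Qed.

Lemma NvE (g : idx m) : Nv R g = match g with iA1 => -s^-1 | iA2 => -s^-1 | _ => 0 end.
Proof. by case: g => [|||| j | j]; rewrite /Nv; simp. Qed.

Lemma sum_if (j : 'I_m) (F : 'I_m -> R) :
  \sum_i (if i == j then F i else 0) = F j.
Proof. by rewrite -big_mkcond big_pred1_eq. Qed.

Lemma sum_mul0 (F : 'I_m -> R) : \sum_i F i * 0 = 0.
Proof. by rewrite big1 // => i _; rewrite mulr0. Qed.
Lemma sum_mulif (j : 'I_m) (F : 'I_m -> R) :
  \sum_i F i * (if i == j then 1 else 0) = F j.
Proof. rewrite -[RHS](sum_if j); apply: eq_bigr => i _; case: eqP => _; simp; done. Qed.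
Lemma sum_mulNif (j : 'I_m) (F : 'I_m -> R) :
  \sum_i F i * (-1 * (if i == j then 1 else 0)) = - F j.
Proof. rewrite -sum_mulif -sumrN; apply: eq_bigr => i _; case: eqP => _; simp; done. Qed.

Lemma JE (v : vec R m) g : J v g = match g with
  | iA1 => v iX0 | iX0 => - v iA1 | iA2 => - v iW0 | iW0 => v iA2
  | iY i => - v (iZ i) | iZ i => v (iY i) end.
Proof.
rewrite /J sum_basis.
by case: g => [|||| j | j]; simp; rewrite ?sum_mul0 ?sum_mulif ?sum_mulNif; simp.
Qed.

Definition TX (u v : vec R m) (e f : idx m) : R := match e, f with
  | iA1, iX0 => u iA1 * v iX0 * c R | iX0, iA1 => - (u iX0 * v iA1 * c R)
  | _, _ => 0 end.
Definition TW (u v : vec R m) (e f : idx m) : R := match e, f with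
  | iA2, iW0 => u iA2 * v iW0 * c R | iW0, iA2 => - (u iW0 * v iA2 * c R)
  | iY i, iZ j => if j == i then u (iY i) * v (iZ j) * c R else 0
  | iZ i, iY j => if j == i then - (u (iZ i) * v (iY j) * c R) else 0
  | _, _ => 0 end.

Lemma brX (u v : vec R m) e f : u e * v f * br R e f iX0 = TX u v e f.
Proof.
rewrite /br /TX; case: e => [|||| i | i]; case: f => [|||| j | j]; simp;
  try (case: eqP => _); simp; done.
Qed.
Lemma brW (u v : vec R m) e f : u e * v f * br R e f iW0 = TW u v e f.
Proof.
rewrite /br /TW; case: e => [|||| i | i]; case: f => [|||| j | j]; simp;
  try rewrite [j == i]eq_sym; try (case: eqP => _); simp; done.
Qed.

Lemma bX (u v : vec R m) : bracket u v iX0 = (u iA1 * v iX0 - u iX0 * v iA1) * c R.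
Proof.
transitivity (\sum_(e <- basis_list m) \sum_(f <- basis_list m) TX u v e f).
  by apply: eq_bigr => e _; apply: eq_bigr => f _; exact: brX.
rewrite !sum_basis /=.
do 3 rewrite ?big1_eq ?addr0 ?add0r.
by rewrite mulrBl.
Qed.

Lemma bW (u v : vec R m) : bracket u v iW0 =
  (u iA2 * v iW0 - u iW0 * v iA2) * c R
  + \sum_i (u (iY i) * v (iZ i) - u (iZ i) * v (iY i)) * c R.
Proof.
transitivity (\sum_(e <- basis_list m) \sum_(f <- basis_list m) TW u v e f).
  by apply: eq_bigr => e _; apply: eq_bigr => f _; exact: brW.
rewrite !sum_basis /=.
do 3 rewrite ?big1_eq ?addr0 ?add0r.
under [X in _ + X + _ = _]eq_bigr do rewrite sum_basis /= big1_eq sum_if !add0r.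
under [X in _ + X = _]eq_bigr do rewrite sum_basis /= big1_eq sum_if !add0r addr0.
rewrite mulrBl -addrA; congr (_ + _).
by rewrite -big_split /=; apply: eq_bigr => i _; rewrite mulrBl.
Qed.

Lemma etaE (v : vec R m) : Defs.eta v = (v iW0 - v iX0) * s^-1.
Proof.
rewrite /Defs.eta /ip; under eq_bigr do rewrite xiE.
rewrite sum_basis /= !sum_mul0; simp.
by rewrite mulrBl addrC.
Qed.

Lemma ip_phi (u w z : vec R m) a : ip u (vadd w (vscale a z)) = ip u w + a * ip u z.
Proof.
rewrite /ip big_distrr -big_split /=; apply: eq_bigr => e _.
by rewrite /vadd /vscale mulrDr mulrCA.
Qed.

Lemma ipJ (u v : vec R m) : ip u (J v) = u iA1 * v iX0 - u iA2 * v iW0 - u iX0 * v iA1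
   + u iW0 * v iA2 - \sum_i (u (iY i) * v (iZ i) - u (iZ i) * v (iY i)).
Proof.
rewrite /ip; under eq_bigr do rewrite JE.
rewrite sum_basis /= !mulrN -!addrA; do 4 congr (_ + _).
rewrite sumrB opprB addrC; congr (_ + _).
by rewrite -sumrN; apply: eq_bigr => i _; rewrite mulrN.
Qed.
End S.

Theorem proposition5p5 (R : rcfType) (n : nat) (hn : (2 <= n)%N)
  (X Y : vec R n.-1) :
  in_sN X -> in_sN Y -> Phi X Y = deta X Y.
Proof.
move=> hX _.
rewrite /Phi /phi ip_phi hX mulr0 addr0 ipJ /deta etaE bW bX -mulr_suml.
set S := \sum_i _.
have hs : Num.sqrt (2:R) != 0 by rewrite sqrtr_eq0 -ltNge ltr0n.
rewrite /c.
field; try exact: hs; rewrite pnatr_eq0.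
Qed.
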